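(* Let $(\Omega,\Sigma,\mathbb{P})$ be a probability space and let $X$ be a Banach function space in $L_0(\Sigma)$. Then for every $\sigma(X,X_n^\sim)$-closed cone $C$ in $X$ such that $C\supset -X_+$ and $C\cap X_+=\{0\}$, there exists a strictly positive functional $\phi\in X_n^\sim$ such that $\phi(x)\le 0$ for all $x\in C$.
   Context: $L_0(\Sigma)$ is the vector lattice of real-valued measurable functions modulo a.e. equality with the a.e. order. A Banach function space is an ideal $X$ of $L_0(\Sigma)$ (i.e. $|x|\le|y|$, $y\in X$ imply $x\in X$) endowed with a complete lattice norm. $X_+=\{x\in X:x\ge0\}$. A linear functional on $X$ is order continuous if $\phi(x_\alpha)\to0$ whenever $x_\alpha\to0$ in order (i.e. there is a net $z_\beta\downarrow0$ in $X$ such that for every $\beta$ eventually $|x_\alpha|\le z_\beta$); $X_n^\sim$ is the space of order continuous linear functionals on $X$, and $\sigma(X,X_n^\sim)$ is the weak topology on $X$ induced by $X_n^\sim$. A functional $\phi$ is strictly positive if $\phi(x)>0$ for all $x\ge0$, $x\ne0$. *)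

(* Defs.v *)
From HB Require Import structures.
From mathcomp Require Import all_boot all_order all_algebra.
From mathcomp Require Import all_classical all_reals all_analysis.
Set Implicit Arguments. Unset Strict Implicit. Unset Printing Implicit Defensive.
Import Order.TTheory GRing.Theory Num.Theory.
Import numFieldNormedType.Exports.
Local Open Scope classical_set_scope.
Local Open Scope ring_scope.

(* Elements of L_0(Sigma) are represented by measurable functions T -> R;
   all order relations / equalities are taken P-almost everywhere, so that
   everything below only depends on a.e.-classes. *)

Section BFS.
Context {d : measure_display} {T : measurableType d} {R : realType}.
Variable P : probability T R.

Definition ale (f g : T -> R) : Prop := {ae P, forall t, f t <= g t}.
Definition aeq (f g : T -> R) : Prop := {ae P, forall t, f t = g t}.

Definition banach_function_space (X : set (T -> R)) (N : (T -> R) -> R) : Prop :=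
  [/\ (forall x, X x -> measurable_fun setT x),
      X (fun _ => 0) /\
      (forall x y, X x -> X y -> X (fun t => x t + y t)) /\
      (forall (a : R) x, X x -> X (fun t => a * x t)),
      (forall (x y : T -> R), measurable_fun setT x -> X y ->
         ale (fun t => `|x t|) (fun t => `|y t|) -> X x),
      (* norm on the quotient by a.e. equality, lattice norm *)
      (forall x y, X x -> X y -> N (fun t => x t + y t) <= N x + N y) /\
      (forall (a : R) x, X x -> N (fun t => a * x t) = `|a| * N x) /\
      (forall x, X x -> (N x = 0 <-> aeq x (fun _ => 0))) /\
      (forall x y, X x -> X y ->
         ale (fun t => `|x t|) (fun t => `|y t|) -> N x <= N y) &
      (forall u : nat -> T -> R, (forall n, X (u n)) ->
         (forall e : R, 0 < e -> exists n0, forall m n, (n0 <= m)%N -> (n0 <= n)%N ->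
            N (fun t => u m t - u n t) < e) ->
         exists x, X x /\
           (forall e : R, 0 < e -> exists n0, forall n, (n0 <= n)%N ->
              N (fun t => u n t - x t) < e))].

Definition functional_on (X : set (T -> R)) (phi : (T -> R) -> R) : Prop :=
  [/\ (forall x y, X x -> X y -> aeq x y -> phi x = phi y),
      (forall x y, X x -> X y -> phi (fun t => x t + y t) = phi x + phi y) &
      (forall (a : R) x, X x -> phi (fun t => a * x t) = a * phi x)].

Definition directed_set (I : Type) (le : I -> I -> Prop) : Prop :=
  [/\ (exists i : I, True), (forall i, le i i),
      (forall i j k, le i j -> le j k -> le i k) &
      (forall i j, exists k, le i k /\ le j k)].

Definition net_decr_to0 (X : set (T -> R)) (B : Type) (leB : B -> B -> Prop)
    (z : B -> T -> R) : Prop :=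
  [/\ directed_set leB, (forall b, X (z b)),
      (forall b b', leB b b' -> ale (z b') (z b)),
      (forall b, ale (fun _ => 0) (z b)) &
      (forall w, X w -> (forall b, ale w (z b)) -> ale w (fun _ => 0))].

Definition order_conv0 (X : set (T -> R)) (A : Type) (leA : A -> A -> Prop)
    (x : A -> T -> R) : Prop :=
  exists (B : Type) (leB : B -> B -> Prop) (z : B -> T -> R),
    net_decr_to0 X leB z /\
    forall b, exists a0, forall a, leA a0 a -> ale (fun t => `|x a t|) (z b).

(* order continuous functionals on X (elements of X_n^~) *)
Definition order_continuous (X : set (T -> R)) (phi : (T -> R) -> R) : Prop :=
  functional_on X phi /\
  forall (A : Type) (leA : A -> A -> Prop) (x : A -> T -> R),
    directed_set leA -> (forall a, X (x a)) -> order_conv0 X leA x ->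
    forall e : R, 0 < e -> exists a0, forall a, leA a0 a -> `|phi (x a)| < e.

(* C (a subset of X) is closed in the weak topology sigma(X, X_n^~):
   every point of X outside C has a basic weak neighbourhood missing C. *)
Definition weakly_closed (X C : set (T -> R)) : Prop :=
  C `<=` X /\
  forall x, X x -> ~ C x ->
    exists (s : seq ((T -> R) -> R)) (e : R),
      (forall phi, phi \in s -> order_continuous X phi) /\ 0 < e /\
      forall y, X y -> (forall phi, phi \in s -> `|phi y - phi x| < e) -> ~ C y.

Definition is_cone (X C : set (T -> R)) : Prop :=
  C `<=` X /\
  (forall x y, C x -> C y -> C (fun t => x t + y t)) /\
  (forall (a : R) x, 0 <= a -> C x -> C (fun t => a * x t)).

Definition strictly_positive (X : set (T -> R)) (phi : (T -> R) -> R) : Prop :=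
  forall x, X x -> ale (fun _ => 0) x -> ~ aeq x (fun _ => 0) -> 0 < phi x.

End BFS.

(* Main.v *)
Require Import Defs.
From HB Require Import structures.
From mathcomp Require Import all_boot all_order all_algebra.
From mathcomp Require Import all_classical all_reals all_analysis.
From mathcomp Require Import ring lra.
Import Order.TTheory GRing.Theory Num.Theory.
Local Open Scope classical_set_scope.
Local Open Scope ring_scope.
Set Implicit Arguments. Unset Strict Implicit. Unset Printing Implicit Defensive.
Section HBfin.
Context {R : realType}.

Lemma eq_ler (x y : R) : x = y -> x <= y. Proof. by move->. Qed.

Definition upd (v : nat -> R) (n : nat) (t : R) : nat -> R :=
  fun i => if i == n then t else v i.

Definition sublin (n : nat) (q : (nat -> R) -> R) : Prop :=
  [/\ (forall u v, q (fun i => u i + v i) <= q u + q v),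
      (forall (a : R) u, 0 <= a -> q (fun i => a * u i) <= a * q u) &
      (forall u v, (forall i, (i < n)%N -> u i = v i) -> q u = q v)].

Definition dot (n : nat) (l v : nat -> R) : R := \sum_(i < n) l i * v i.

Lemma sublin0 n q : sublin n q -> q (fun _ => 0) = 0.
Proof.
case=> qD qZ _.
have h1 := qZ 0 (fun _ => 0) (lexx _).
have h2 := qD (fun _ => 0) (fun _ => 0).
have e1 : (fun i : nat => 0 * (fun _ : nat => (0:R)) i) = (fun _ => 0).
  by apply: funext => i; rewrite mul0r.
have e2 : (fun i : nat => (fun _ : nat => (0:R)) i + (fun _ : nat => (0:R)) i) = (fun _ => 0).
  by apply: funext => i; rewrite addr0.
rewrite e1 mul0r in h1; rewrite e2 in h2.
apply/eqP; rewrite eq_le h1 /=.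
by rewrite -(lerD2l (q (fun _ => 0))) addr0.
Qed.

Lemma sublinZ n q (a : R) u : sublin n q -> 0 < a -> q (fun i => a * u i) = a * q u.
Proof.
move=> sq a0; have [_ qZ _] := sq.
apply/eqP; rewrite eq_le; apply/andP; split; first exact: qZ (ltW a0).
have := qZ a^-1 (fun i => a * u i); rewrite invr_ge0 ltW // => /(_ isT).
have -> : (fun i => a^-1 * (fun i0 : nat => a * u i0) i) = u.
  by apply: funext => i /=; rewrite mulrA mulVf ?gt_eqF // mul1r.
move=> h; rewrite -(ler_pM2l a0) mulrA mulfV ?gt_eqF // mul1r in h; exact: h.
Qed.

Lemma hb_fin n : forall q, sublin n q -> forall p, exists l,
  (forall v, dot n l v <= q v) /\ dot n l p = q p.
Proof.
elim: n => [|n IH] q sq p.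
  have qc : forall v, q v = 0.
    move=> v; have [_ _ qL] := sq; rewrite (qL v (fun _ => 0)) ?(sublin0 sq) //.
  by exists (fun _ => 0); split => [v|]; rewrite /dot big_ord0 qc.
have [qD qZ qL] := sq.
pose a := p n.
pose g t := q (upd p n t).
have conv : forall s u, s < a -> a < u -> (g a - g s) / (a - s) <= (g u - g a) / (u - a).
  move=> s u sa au.
  have al : 0 < a - s by rewrite subr_gt0.
  have be : 0 < u - a by rewrite subr_gt0.
  have key : (u - a + (a - s)) * g a <= (u - a) * g s + (a - s) * g u.
    rewrite /g -(sublinZ _ sq); last by rewrite addr_gt0.
    have -> : (fun i => (u - a + (a - s)) * upd p n a i) =
      (fun i => (fun i => (u - a) * upd p n s i) i + (fun i => (a - s) * upd p n u i) i).
      apply: funext => i; rewrite /upd; case: eqP => _ /=; last by rewrite -mulrDl.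
      rewrite /a; ring.
    apply: le_trans (qD _ _) _.
    by rewrite lerD // qZ // ltW.
  rewrite ler_pdivrMr // mulrAC ler_pdivlMr //.
  move: key; rewrite mulrDl; set G := g a; nra.
pose L := [set (g a - g s) / (a - s) | s in [set s | s < a]].
have L0 : L !=set0 by exists ((g a - g (a - 1)) / (a - (a - 1))); exists (a - 1) => //=; rewrite ltrBlDr ltrDl.
have Lub : forall u, a < u -> ubound L ((g u - g a) / (u - a)).
  by move=> u au _ [s /= sa <-]; apply: conv.
have hL : has_ubound L by exists ((g (a+1) - g a) / (a + 1 - a)); apply: Lub; rewrite ltrDl.
pose c := sup L.
have subg : forall t, g a + c * (t - a) <= g t.
  move=> t; case: (ltgtP t a) => [ta|ta2|->]; last by rewrite subrr mulr0 addr0.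
  - have : (g a - g t) / (a - t) <= c by apply: ub_le_sup => //; exists t.
    rewrite ler_pdivrMr ?subr_gt0 // => h.
    move: h; nra.
  - have : c <= (g t - g a) / (t - a) by apply: ge_sup => //; apply: Lub.
    by rewrite ler_pdivlMr ?subr_gt0 // => h; nra.
pose E v := [set q (upd v n t) - c * t | t in [set: R]].
pose qc v := inf (E v).
have E0 : forall v, E v !=set0 by move=> v; exists (q (upd v n 0) - c * 0); exists 0.
have Elb : forall v, has_lbound (E v).
  move=> v; exists (g a - c * a - q (fun i => upd p n 0 i - upd v n 0 i)).
  move=> _ [t _ <-].
  have h1 : g t <= q (upd v n t) + q (fun i => upd p n 0 i - upd v n 0 i).
    rewrite /g; apply: le_trans (qD _ _); apply: eq_ler; congr q; apply: funext => i.
    by rewrite /upd; case: eqP => _; ring.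
  have := subg t; move: h1; set w := q _; nra.
have qc_le : forall v t, qc v <= q (upd v n t) - c * t.
  by move=> v t; apply: ge_inf => //; exists t.
have qc_ge : forall v b, (forall t, b <= q (upd v n t) - c * t) -> b <= qc v.
  by move=> v b h; apply: lb_le_inf => // _ [t _ <-].
have sqc : sublin n qc.
  split.
  - move=> u v; rewrite -lerBlDr; apply: (qc_ge) => t1; rewrite lerBlDr addrC -lerBlDr.
    apply: (qc_ge) => t2; rewrite lerBlDr.
    apply: le_trans ((qc_le) _ (t1 + t2)) _.
    apply: le_trans (_ : q (upd u n t1) + q (upd v n t2) - c * (t1 + t2) <= _); last by apply: eq_ler; ring.
    rewrite lerD2r; apply: le_trans (qD _ _); apply: eq_ler; congr q; apply: funext => i.
    by rewrite /upd; case: eqP.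
  - move=> b u b0; case: (eqVneq b 0) => [->|bn0].
      rewrite mul0r; apply: le_trans ((qc_le) _ 0) _.
      rewrite mulr0 subr0 -[X in _ <= X](sublin0 sq); apply: eq_ler; congr q; apply: funext => i.
      by rewrite /upd; case: eqP => _ //; rewrite mul0r.
    have bp : 0 < b by rewrite lt_neqAle eq_sym bn0.
    rewrite mulrC -ler_pdivrMr //; apply: (qc_ge) => t; rewrite ler_pdivrMr //.
    apply: le_trans ((qc_le) _ (b * t)) _.
    have -> : upd (fun i => b * u i) n (b * t) = (fun i => b * upd u n t i).
      by apply: funext => i; rewrite /upd; case: eqP.
    by rewrite (sublinZ _ sq) // mulrBl; apply: eq_ler; ring.
  - move=> u v huv; congr inf; rewrite /E; congr image; apply: funext => t.
    congr (_ - _); apply: qL => i ilt; rewrite /upd; case: eqP => // /eqP ineq.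
    by apply: huv; rewrite ltn_neqAle ineq -ltnS.
have [l' [hl1 hl2]] := IH qc sqc p.
have dotS : forall v, dot n.+1 (upd l' n c) v = dot n l' v + c * v n.
  move=> v; rewrite /dot big_ord_recr /= /upd eqxx; congr (_ + _).
  by apply: eq_bigr => i _; rewrite ifN // neq_ltn ltn_ord.
exists (upd l' n c); split.
  move=> v; rewrite dotS; apply: le_trans (_ : qc v + c * v n <= _); first by rewrite lerD2r.
  apply: le_trans (_ : q (upd v n (v n)) - c * v n + c * v n <= _); first by rewrite lerD2r (qc_le).
  rewrite subrK; apply: eq_ler; congr q; apply: funext => i; rewrite /upd.
  by case: eqP => // ->.
rewrite dotS hl2.
have -> : qc p = g a - c * a.
  apply/eqP; rewrite eq_le; apply/andP; split.
    by apply: le_trans ((qc_le) _ a) _; rewrite /g.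
  apply: (qc_ge) => t; have := subg t; rewrite /g; nra.
rewrite subrK /g; congr q; apply: funext => i; rewrite /upd.
by case: eqP => // ->.
Qed.

Definition Mx n (w : nat -> R) := \big[Order.max/0]_(i < n) `|w i|.
Lemma Mx_ge0 n w : 0 <= Mx n w. Proof. exact: bigmax_ge_id. Qed.
Lemma Mx_le n w i : (i < n)%N -> `|w i| <= Mx n w.
Proof. by move=> ilt; have := le_bigmax 0 (fun j : 'I_n => `|w j|) (Ordinal ilt). Qed.
Lemma Mx_ub n w b : 0 <= b -> (forall i, (i < n)%N -> `|w i| <= b) -> Mx n w <= b.
Proof. by move=> b0 h; apply: bigmax_le => // i _; apply: h. Qed.
Lemma Mx_loc n u w : (forall i, (i < n)%N -> u i = w i) -> Mx n u = Mx n w.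
Proof. by move=> h; apply: eq_bigr => i _; rewrite h. Qed.
Lemma Mx_D n u w : Mx n (fun i => u i + w i) <= Mx n u + Mx n w.
Proof.
apply: Mx_ub; first by rewrite addr_ge0 ?Mx_ge0.
by move=> i ilt; apply: le_trans (ler_normD _ _) _; rewrite lerD ?Mx_le.
Qed.
Lemma Mx_Z n (a : R) w : 0 <= a -> Mx n (fun i => a * w i) <= a * Mx n w.
Proof.
move=> a0; apply: Mx_ub; first by rewrite mulr_ge0 ?Mx_ge0.
by move=> i ilt; rewrite normrM ger0_norm // ler_wpM2l // Mx_le.
Qed.
Lemma Mx_lt n w e i : Mx n w < e -> (i < n)%N -> `|w i| < e.
Proof. by move=> h ilt; apply: le_lt_trans h; apply: Mx_le. Qed.
Lemma Mx0 n : Mx n (fun _ => 0) = 0.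
Proof. by apply/eqP; rewrite eq_le Mx_ge0 Mx_ub // => i _; rewrite normr0. Qed.

Definition w (k : nat) : R := ((2:R) ^+ k)^-1.
Lemma w_gt0 k : 0 < w k. Proof. by rewrite /w invr_gt0 exprn_gt0. Qed.
Lemma w_ge0 k : 0 <= w k. Proof. exact: ltW (w_gt0 k). Qed.
Lemma wS k : w k.+1 = w k / 2. Proof. by rewrite /w exprS invfM mulrC. Qed.
Lemma w_small (K e : R) : 0 < e -> exists k, K * w k < e.
Proof.
move=> e0; case: (leP K 0) => K0.
  by exists 0%N; apply: le_lt_trans e0; rewrite mulr_le0_ge0 // w_ge0.
have hb := archi_boundP (ltW (divr_gt0 K0 e0)); set B := Num.Def.archi_bound _ in hb.
exists B; rewrite /w ltr_pdivrMr ?exprn_gt0 // -ltr_pdivrMl //.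
rewrite mulrC; apply: lt_le_trans hb _.
have : (B < 2 ^ B)%N by apply: ltn_expl.
by rewrite -(ltr_nat R) natrX => /ltW.
Qed.
Lemma le_w (a b K : R) : (forall k, a <= b + K * w k) -> a <= b.
Proof.
move=> h; rewrite leNgt; apply/negP => ba.
have ba' : 0 < a - b by rewrite subr_gt0.
have [k hk] := w_small K ba'.
by have := h k; rewrite -lerBlDl leNgt hk.
Qed.
Lemma eq0_w (a K : R) : (forall k, `|a| <= K * w k) -> a = 0.
Proof.
move=> h; apply/eqP; rewrite -normr_le0; apply: (le_w (b:=0) (K:=K)) => k.
by rewrite add0r.
Qed.

Definition glim (S : nat -> R) (K : R) := sup [set S m - 2 * K * w m | m in [set: nat]].

Lemma glimP S K : 0 <= K -> (forall k, `|S k.+1 - S k| <= K * w k) ->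
  forall l, `|glim S K - S l| <= 2 * K * w l.
Proof.
move=> K0 hS.
have st1 : forall l d, `|S (l + d)%N - S l| <= 2 * K * (w l - w (l + d)%N).
  move=> l; elim=> [|dd IH]; first by rewrite addn0 !subrr normr0 mulr0.
  rewrite addnS; apply: le_trans (_ : `|S (l + dd).+1 - S (l + dd)%N| + `|S (l + dd)%N - S l| <= _).
    by apply: le_trans (ler_normD _ _); rewrite addrA subrK.
  apply: le_trans (lerD (hS _) IH) _; by rewrite wS; apply: eq_ler; field.
have st2 : forall l m, (l <= m)%N -> `|S m - S l| <= 2 * K * (w l - w m).
  by move=> l m lm; have := st1 l (m - l)%N; rewrite subnKC.
pose V m := S m - 2 * K * w m.
have Vmono : forall l m, (l <= m)%N -> V l <= V m.
  move=> l m lm; have := st2 _ _ lm; rewrite /V => h.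
  have h2 := ler_norm (S l - S m); rewrite distrC in h2.
  have := le_trans h2 h; lra.
have Vub : forall l m, V m <= S l + 2 * K * w l.
  move=> l m; case: (leqP l m) => lm.
    have := st2 _ _ lm; rewrite /V => h.
    have h2 := ler_norm (S m - S l).
    have := w_ge0 m; have := w_ge0 l; have := le_trans h2 h; nra.
  apply: le_trans (Vmono _ _ (ltnW lm)) _; rewrite /V.
  have := w_ge0 l; nra.
pose E := [set S m - 2 * K * w m | m in [set: nat]].
have E0 : E !=set0 by exists (V 0%N); exists 0%N.
have Eub : has_ubound E by exists (S 0%N + 2 * K * w 0); move=> _ [m _ <-]; apply: Vub.
move=> l; rewrite ler_norml; apply/andP; split.
  suff : V l <= glim S K by rewrite /V; lra.
  by apply: ub_le_sup => //; exists l.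
suff : glim S K <= S l + 2 * K * w l by lra.
by apply: ge_sup => // _ [m _ <-]; apply: Vub.
Qed.
End HBfin.

Section Main.
Context {d : measure_display} {T : measurableType d} {R : realType}
  (P : probability T R) (X : set (T -> R)) (N : (T -> R) -> R)
  (hX : banach_function_space P X N).

Lemma aeWP (Q : T -> Prop) : (forall t, Q t) -> \forall t \ae P, Q t.
Proof. exact: aeW. Qed.

Definition pr (A : set T) : R := fine (P A).
Lemma Pfin A : measurable A -> P A \is a fin_num.
Proof. by move=> mA; apply: fin_num_measure. Qed.
Lemma prE A : measurable A -> P A = (pr A)%:E.
Proof. by move=> mA; rewrite /pr fineK // Pfin. Qed.
Lemma pr_ge0 A : 0 <= pr A. Proof. exact: fine_ge0 (measure_ge0 _ _). Qed.
Lemma pr_le1 A : measurable A -> pr A <= 1.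
Proof.
move=> mA; rewrite -lee_fin -prE // -(probability_setT P).
by apply: le_measure; rewrite ?inE.
Qed.
Lemma pr_mono A B : measurable A -> measurable B -> A `<=` B -> pr A <= pr B.
Proof. by move=> mA mB AB; rewrite -lee_fin -!prE //; apply: le_measure; rewrite ?inE. Qed.
Lemma prU A B : measurable A -> measurable B -> A `&` B = set0 -> pr (A `|` B) = pr A + pr B.
Proof.
move=> mA mB AB; apply/eqP; rewrite -(@eqe R) EFinD -!prE //; last exact: measurableU.
by rewrite measureU.
Qed.
Lemma pr0 A : measurable A -> pr A = 0 -> P A = 0.
Proof. by move=> mA h; rewrite prE // h. Qed.
Lemma negl_ae (A : set T) (Q : T -> Prop) : measurable A -> P A = 0 ->
  (forall t, ~ A t -> Q t) -> \forall t \ae P, Q t.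
Proof.
move=> mA PA h; exists A; split => // t /= nQ; apply: contrapT => nA; apply: nQ; exact: h.
Qed.

Lemma Xm x : X x -> measurable_fun setT x. Proof. by move=> hx; case: hX => h *; apply: h. Qed.
Lemma X0 : X (fun _ => 0). Proof. by case: hX => _ [h _]. Qed.
Lemma XD x y : X x -> X y -> X (fun t => x t + y t). Proof. by move=> hx hy; case: hX => _ [_ [h _]] *; apply: h. Qed.
Lemma XZ (a : R) x : X x -> X (fun t => a * x t). Proof. by move=> hx; case: hX => _ [_ [_ h]] *; apply: h. Qed.
Lemma XN x : X x -> X (fun t => - x t).
Proof.
move=> hx; have -> : (fun t => - x t) = (fun t => -1 * x t) by apply: funext => t; rewrite mulN1r.
exact: XZ.
Qed.
Lemma XB x y : X x -> X y -> X (fun t => x t - y t).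
Proof. by move=> hx hy; apply: XD => //; apply: XN. Qed.
Lemma Xid (x y : T -> R) : measurable_fun setT x -> X y -> ale P (fun t => `|x t|) (fun t => `|y t|) -> X x.
Proof. by move=> hx hy hxy; case: hX => _ _ h *; apply: (h x y). Qed.

Lemma NDl x y : X x -> X y -> N (fun t => x t + y t) <= N x + N y.
Proof. by move=> hx hy; case: hX => _ _ _ [h _] _; apply: h. Qed.
Lemma NZl (a : R) x : X x -> N (fun t => a * x t) = `|a| * N x.
Proof. by move=> hx; case: hX => _ _ _ [_ [h _]] _; apply: h. Qed.
Lemma N0P x : X x -> (N x = 0 <-> aeq P x (fun _ => 0)).
Proof. by move=> hx; case: hX => _ _ _ [_ [_ [h _]]] _; apply: h. Qed.
Lemma Nmono x y : X x -> X y -> ale P (fun t => `|x t|) (fun t => `|y t|) -> N x <= N y.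
Proof. by move=> hx hy hxy; case: hX => _ _ _ [_ [_ [_ h]]] _; apply: h. Qed.
Lemma Ncst0 : N (fun _ => 0) = 0.
Proof. by apply/(N0P X0); apply: aeWP. Qed.
Lemma N_ge0 x : X x -> 0 <= N x.
Proof.
move=> hx; have h := NDl hx (XN hx).
have e1 : (fun t => x t + - x t) = (fun _ => 0) by apply: funext => t; rewrite subrr.
have e2 : (fun t => - x t) = (fun t => -1 * x t) by apply: funext => t; rewrite mulN1r.
rewrite e1 Ncst0 e2 NZl // normrN normr1 mul1r in h; lra.
Qed.
Lemma N_ae x y : X x -> X y -> aeq P x y -> N x = N y.
Proof.
move=> hx hy hxy; apply/eqP; rewrite eq_le; apply/andP; split; apply: Nmono => //;
  by apply: filterS hxy => t ->.
Qed.
Lemma Xabs x : X x -> X (fun t => `|x t|).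
Proof.
move=> hx; apply: (@Xid _ x) => //; first exact: measurableT_comp (@measurable_realfun.normr_measurable R setT) (Xm hx).
by apply: aeWP => t; rewrite normr_id.
Qed.
Lemma Nabs x : X x -> N (fun t => `|x t|) = N x.
Proof.
move=> hx; apply/eqP; rewrite eq_le; apply/andP; split; apply: Nmono;
  rewrite //; try exact: Xabs; by apply: aeWP => t; rewrite normr_id.
Qed.
Lemma Nsym x y : X x -> X y -> N (fun t => x t - y t) = N (fun t => y t - x t).
Proof.
move=> hx hy; rewrite -[RHS]mul1r -normr1 -(normrN 1) -NZl; last exact: XB.
by congr N; apply: funext => t; ring.
Qed.

Definition posf (phi : (T -> R) -> R) := forall y, X y -> ale P (fun _ => 0) y -> 0 <= phi y.

Section Fun.
Variable phi : (T -> R) -> R.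
Hypothesis fphi : functional_on P X phi.
Lemma linD x y : X x -> X y -> phi (fun t => x t + y t) = phi x + phi y.
Proof. by case: fphi => _ h _; apply: h. Qed.
Lemma linZ (a : R) x : X x -> phi (fun t => a * x t) = a * phi x.
Proof. by case: fphi => _ _ h; apply: h. Qed.
Lemma lin_ae x y : X x -> X y -> aeq P x y -> phi x = phi y.
Proof. by case: fphi => h _ _; apply: h. Qed.
Lemma lin0 : phi (fun _ => 0) = 0.
Proof.
have -> : (fun _ : T => (0:R)) = (fun t => 0 * (fun _ : T => (0:R)) t).
  by apply: funext => t; rewrite mul0r.
by rewrite linZ ?mul0r //; exact: X0.
Qed.
Lemma linN x : X x -> phi (fun t => - x t) = - phi x.
Proof.
move=> hx; have -> : (fun t => - x t) = (fun t => -1 * x t) by apply: funext => t; rewrite mulN1r.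
by rewrite linZ // mulN1r.
Qed.
Lemma linB x y : X x -> X y -> phi (fun t => x t - y t) = phi x - phi y.
Proof. by move=> hx hy; rewrite linD ?linN //; apply: XN. Qed.

Lemma pos_mono y z : posf phi -> X y -> X z -> ale P y z -> phi y <= phi z.
Proof.
move=> pp hy hz hyz; rewrite -subr_ge0 -linB //; apply: pp; first exact: XB.
by apply: filterS hyz => t; rewrite subr_ge0.
Qed.
Lemma pos_abs y : posf phi -> X y -> `|phi y| <= phi (fun t => `|y t|).
Proof.
move=> pp hy; rewrite ler_norml; apply/andP; split.
  rewrite lerNl -linN //; apply: pos_mono => //; [exact: XN | exact: Xabs|].
  by apply: aeWP => t; rewrite -normrN ler_norm.
by apply: pos_mono => //; [exact: Xabs|]; apply: aeWP => t; exact: ler_norm.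
Qed.
End Fun.

Lemma w_mono l m : (l <= m)%N -> w m <= w l :> R.
Proof.
move=> lm; rewrite -(subnKC lm); elim: (m - l)%N => [|k IH]; first by rewrite addn0.
by rewrite addnS wS; apply: le_trans IH; rewrite ler_pdivrMr // ler_peMr // ?w_ge0 // ler1n.
Qed.

Lemma Xsum (u : nat -> T -> R) (c : nat -> R) m : (forall k, X (u k)) ->
  X (fun t => \sum_(k < m) c k * u k t).
Proof.
move=> hu; elim: m => [|m IH].
  have -> : (fun t => \sum_(k < 0) c k * u k t) = (fun _ => 0) by apply: funext => t; rewrite big_ord0.
  exact: X0.
have -> : (fun t => \sum_(k < m.+1) c k * u k t) =
  (fun t => (fun t => \sum_(k < m) c k * u k t) t + (fun t => c m * u m t) t).
  by apply: funext => t; rewrite big_ord_recr.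
by apply: XD => //; apply: XZ.
Qed.

Lemma lin_sum phi (u : nat -> T -> R) (c : nat -> R) m : functional_on P X phi ->
  (forall k, X (u k)) ->
  phi (fun t => \sum_(k < m) c k * u k t) = \sum_(k < m) c k * phi (u k).
Proof.
move=> fphi hu; elim: m => [|m IH].
  have -> : (fun t => \sum_(k < 0) c k * u k t) = (fun _ => 0) by apply: funext => t; rewrite big_ord0.
  by rewrite big_ord0 (lin0 fphi).
have -> : (fun t => \sum_(k < m.+1) c k * u k t) =
  (fun t => (fun t => \sum_(k < m) c k * u k t) t + (fun t => c m * u m t) t).
  by apply: funext => t; rewrite big_ord_recr.
rewrite (linD fphi) ?(linZ fphi) ?IH ?big_ord_recr //; [exact: Xsum | exact: XZ].
Qed.

Lemma pos_bounded phi : functional_on P X phi -> posf phi ->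
  exists M, 0 <= M /\ forall y, X y -> `|phi y| <= M * N y.
Proof.
move=> fphi pphi.
have [//|hno] := pselect (exists M, 0 <= M /\ forall y, X y -> `|phi y| <= M * N y).
exfalso.
have hk : forall k : nat, exists y, X y /\ (2:R) ^+ k * N y < `|phi y|.
  move=> k; apply: contrapT => hk; apply: hno; exists (2 ^+ k); split; first exact: exprn_ge0.
  move=> y hy; rewrite leNgt; apply/negP => hlt; apply: hk; exists y; split => //.
have [yk hyk] := choice hk.
have Xy : forall k, X (yk k) by move=> k; case: (hyk k).
have Npos : forall k, 0 < N (yk k).
  move=> k; rewrite lt_neqAle N_ge0 // andbT; apply/negP => /eqP h.
  have [_ hk2] := hyk k; move: hk2; rewrite -h mulr0.
  have -> : phi (yk k) = phi (fun _ => 0) by apply: (lin_ae fphi) => //; [exact: X0|]; apply/N0P.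
  by rewrite (lin0 fphi) normr0 ltxx.
pose u k := fun t => (N (yk k))^-1 * `|yk k t|.
have Xu : forall k, X (u k) by move=> k; apply: XZ; apply: Xabs.
have u0 : forall k t, 0 <= u k t by move=> k t; rewrite mulr_ge0 ?invr_ge0 ?N_ge0 // normr_ge0.
have Nu : forall k, N (u k) = 1.
  move=> k; rewrite NZl; last exact: Xabs.
  by rewrite Nabs // ger0_norm ?invr_ge0 ?N_ge0 // mulVf // gt_eqF.
have phiu : forall k, (2:R) ^+ k <= phi (u k).
  move=> k; rewrite (linZ fphi); last exact: Xabs.
  apply: le_trans (_ : (N (yk k))^-1 * `|phi (yk k)| <= _); last first.
    by rewrite ler_wpM2l ?invr_ge0 ?N_ge0 // pos_abs.
  rewrite mulrC ler_pdivlMr //; case: (hyk k) => _ /ltW; rewrite mulrC //.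
pose sm m := fun t => \sum_(k < m) w k * u k t.
have Xs : forall m, X (sm m) by move=> m; apply: Xsum.
have phis : forall m, m%:R <= phi (sm m).
  move=> m; rewrite (lin_sum _ _ fphi Xu).
  have -> : m%:R = \sum_(k < m) (1:R) by rewrite sumr_const card_ord.
  apply: ler_sum => k _; apply: le_trans (_ : w k * 2 ^+ k <= _).
    by rewrite /w mulVf // expf_neq0.
  by rewrite ler_wpM2l ?w_ge0.
have sS : forall m, sm m.+1 = (fun t => sm m t + w m * u m t).
  by move=> m; apply: funext => t; rewrite /sm big_ord_recr.
have smono : forall l d t, sm l t <= sm (l + d)%N t.
  move=> l; elim=> [|dd IH] t; first by rewrite addn0.
  by rewrite addnS sS; apply: le_trans (IH t) _; rewrite lerDl mulr_ge0 ?w_ge0.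
have scau : forall l d, N (fun t => sm (l + d)%N t - sm l t) <= 2 * (w l - w (l + d)%N).
  move=> l; elim=> [|dd IH].
    have -> : (fun t => sm (l + 0)%N t - sm l t) = (fun _ => 0) by apply: funext => t; rewrite addn0 subrr.
    by rewrite Ncst0 addn0 subrr mulr0.
  rewrite addnS sS.
  have -> : (fun t => (fun t => sm (l + dd)%N t + w (l + dd)%N * u (l + dd)%N t) t - sm l t) =
    (fun t => (fun t => sm (l + dd)%N t - sm l t) t + (fun t => w (l + dd)%N * u (l + dd)%N t) t).
    by apply: funext => t /=; ring.
  apply: le_trans (NDl (XB (Xs _) (Xs _)) (XZ _ (Xu _))) _.
  rewrite NZl // Nu mulr1 ger0_norm ?w_ge0 // wS.
  by apply: le_trans (lerD IH (lexx _)) _; apply: eq_ler; field.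
have scau2 : forall l m, (l <= m)%N -> N (fun t => sm m t - sm l t) <= 2 * w l.
  move=> l m lm; have := scau l (m - l)%N; rewrite subnKC // => h; apply: le_trans h _.
  by rewrite ler_pM2l // lerBlDr lerDl w_ge0.
have [x [hx hxl]] : exists x, X x /\ (forall e : R, 0 < e -> exists n0, forall n, (n0 <= n)%N ->
              N (fun t => sm n t - x t) < e).
  case: hX => _ _ _ _ hc; apply: hc => // e e0.
  have [n0 hn0] := w_small 2 e0.
  exists n0 => m n hm hn; case: (leqP n m) => nm.
    by apply: le_lt_trans (scau2 _ _ nm) _; apply: le_lt_trans hn0; rewrite ler_pM2l // w_mono.
  rewrite Nsym ?Xs //; apply: le_lt_trans (scau2 _ _ (ltnW nm)) _.
  by apply: le_lt_trans hn0; rewrite ler_pM2l // w_mono.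
have sle : forall m, ale P (sm m) x.
  move=> m; pose v := fun t => Num.max (sm m t - x t) 0.
  have mv : measurable_fun setT v.
    exact: (measurable_realfun.measurable_maxr (Xm (XB (Xs m) hx)) (measurable_cst (0:R))).
  have vbound : forall M, (m <= M)%N -> forall t, `|v t| <= `|sm M t - x t|.
    move=> M mM t; rewrite ger0_norm ?le_max ?lexx ?orbT //.
    rewrite ge_max normr_ge0 andbT; apply: le_trans (ler_norm _); rewrite lerD2r.
    by have := smono m (M - m)%N t; rewrite subnKC.
  have Xv : X v by apply: (Xid mv (XB (Xs m) hx)); apply: aeWP => t; exact: vbound.
  have Nv : N v = 0.
    apply/eqP; rewrite eq_le N_ge0 // andbT.
    apply: (le_w (b:=0) (K:=1)) => k; rewrite add0r mul1r.
    have [n0 hn0] := hxl (w k) (w_gt0 k).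
    apply: le_trans (ltW (hn0 (maxn n0 m) (leq_maxl _ _))).
    by apply: Nmono => //; [exact: XB | apply: aeWP => t; apply: vbound; exact: leq_maxr].
  have := (N0P Xv).1 Nv; apply: filterS => t; rewrite /v => /eqP.
  by rewrite eq_le ge_max lexx andbT subr_le0 => /andP [].
have phix : forall m, m%:R <= phi x.
  by move=> m; apply: le_trans (phis m) _; apply: pos_mono.
have := archi_boundP (normr_ge0 (phi x)); set B := Num.Def.archi_bound _ => hB.
have := phix B; rewrite leNgt; move/negP; apply; exact: le_lt_trans (ler_norm _) hB.
Qed.

Lemma ocD f g : order_continuous P X f -> order_continuous P X g ->
  order_continuous P X (fun y => f y + g y).
Proof.
move=> [ff hf] [fg hg]; split.
  split.
  - by move=> x y hx hy e; rewrite (lin_ae ff hx hy e) (lin_ae fg hx hy e).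
  - by move=> x y hx hy; rewrite (linD ff) // (linD fg) //; ring.
  - by move=> a x hx; rewrite (linZ ff) // (linZ fg) //; ring.
move=> A leA x dA hx hc e e0.
have e2 : 0 < e / 2 by rewrite divr_gt0.
have [a1 h1] := hf A leA x dA hx hc _ e2.
have [a2 h2] := hg A leA x dA hx hc _ e2.
case: dA => _ _ tr dir; have [k [k1 k2]] := dir a1 a2.
exists k => a ka; apply: le_lt_trans (ler_normD _ _) _.
rewrite (splitr e); apply: ltrD; [apply: h1|apply: h2]; exact: tr ka.
Qed.

Lemma ocZ (c : R) f : order_continuous P X f -> order_continuous P X (fun y => c * f y).
Proof.
move=> [ff hf]; split.
  split.
  - by move=> x y hx hy e; rewrite (lin_ae ff hx hy e).
  - by move=> x y hx hy; rewrite (linD ff) //; ring.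
  - by move=> a x hx; rewrite (linZ ff) //; ring.
move=> A leA x dA hx hc e e0.
have c1 : 0 < `|c| + 1 by rewrite ltr_pwDr // normr_ge0.
have [a1 h1] := hf A leA x dA hx hc (e / (`|c| + 1)) (divr_gt0 e0 c1).
exists a1 => a aa; rewrite normrM.
have := h1 a aa; rewrite ltr_pdivlMr // => h.
apply: le_lt_trans h; rewrite mulrDr mulr1 mulrC lerDl normr_ge0 //.
Qed.

Lemma oc0 : order_continuous P X (fun _ => 0).
Proof.
split.
  by split => *; rewrite ?mulr0 ?addr0.
move=> A leA x [[i _] _ _ _] _ _ e e0; exists i => a _; by rewrite normr0.
Qed.

Lemma ocsum n (l : nat -> R) (f : nat -> (T -> R) -> R) :
  (forall i, (i < n)%N -> order_continuous P X (f i)) ->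
  order_continuous P X (fun y => \sum_(i < n) l i * f i y).
Proof.
elim: n => [|n IH] hf.
  have -> : (fun y => \sum_(i < 0) l i * f i y) = (fun _ => 0).
    by apply: funext => y; rewrite big_ord0.
  exact: oc0.
have -> : (fun y => \sum_(i < n.+1) l i * f i y) =
  (fun y => (fun y => \sum_(i < n) l i * f i y) y + (fun y => l n * f n y) y).
  by apply: funext => y; rewrite big_ord_recr.
apply: ocD; first by apply: IH => i ilt; apply: hf; rewrite ltnS ltnW.
by apply: ocZ; apply: hf.
Qed.


Lemma ind1 (A : set T) t : A t -> \1_A t = 1 :> R.
Proof. by move=> h; rewrite indicE mem_set. Qed.
Lemma ind0 (A : set T) t : ~ A t -> \1_A t = 0 :> R.
Proof. by move=> h; rewrite indicE memNset. Qed.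
Lemma ind01 (A : set T) t : \1_A t = 0 :> R \/ \1_A t = 1 :> R.
Proof. by case: (pselect (A t)) => h; [right; apply: ind1 | left; apply: ind0]. Qed.

Definition rz (z : T -> R) (A : set T) := fun t => z t * \1_A t.
Lemma Xrz z A : measurable A -> X z -> X (rz z A).
Proof.
move=> mA hz; apply: (Xid _ hz).
  exact: measurable_realfun.measurable_funM (Xm hz) (measurable_realfun.measurable_indic mA).
apply: aeWP => t; rewrite /rz normrM; case: (ind01 A t) => ->;
  by rewrite ?normr0 ?normr1 ?mulr0 ?mulr1 ?normr_ge0.
Qed.
Lemma rz_ge0 z A : ale P (fun _ => 0) z -> ale P (fun _ => 0) (rz z A).
Proof.
by apply: filterS => t z0; rewrite /rz; case: (ind01 A t) => ->; rewrite ?mulr0 ?mulr1.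
Qed.
Lemma rz_split z A : z = (fun t => rz z A t + rz z (~` A) t).
Proof.
apply: funext => t; rewrite /rz; case: (pselect (A t)) => h.
  by rewrite ind1 // ind0 ?mulr1 ?mulr0 ?addr0 //; apply.
by rewrite ind0 // ind1 // mulr1 mulr0 add0r.
Qed.

Definition supp (z : T -> R) (A : set T) := \forall t \ae P, ~ A t -> z t = 0.
Definition killed (phi : (T -> R) -> R) (A : set T) :=
  forall z, X z -> ale P (fun _ => 0) z -> supp z A -> phi z = 0.

Lemma supp_rz z A : supp (rz z A) A.
Proof. by apply: aeWP => t h; rewrite /rz ind0 // mulr0. Qed.

Lemma killed_sub phi A B : B `<=` A -> killed phi A -> killed phi B.
Proof. move=> BA kA z hz z0 sz; apply: kA => //; move: sz; rewrite /supp; apply: filterS => t h nA; apply: h => /BA. exact: nA. Qed.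

Lemma killed_U phi A B : functional_on P X phi -> measurable A ->
  killed phi A -> killed phi B -> killed phi (A `|` B).
Proof.
move=> fphi mA kA kB z hz z0 sz.
have X1 := Xrz mA hz; have X2 := Xrz (measurableC mA) hz.
rewrite (rz_split z A) (linD fphi X1 X2) (kA _ X1 (rz_ge0 _ z0) (supp_rz _ _)) add0r.
apply: kB; [exact: Xrz (measurableC mA) hz | exact: rz_ge0 |].
move: sz; rewrite /supp; apply: filterS => t h nB; rewrite /rz; case: (pselect (A t)) => hA.
  by rewrite ind0 ?mulr0 //; apply.
by rewrite h ?mul0r // => -[].
Qed.

Lemma killed0 phi : functional_on P X phi -> killed phi set0.
Proof.
move=> fphi z hz z0 sz; rewrite (lin_ae fphi hz X0) ?(lin0 fphi) //.
by move: sz; rewrite /supp; apply: filterS => t; apply.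
Qed.

Lemma eq0_lt (a : R) : (forall e, 0 < e -> `|a| < e) -> a = 0.
Proof. by move=> h; apply: (eq0_w (K := 1)) => k; rewrite mul1r ltW // h // w_gt0. Qed.

Lemma dir_nat : directed_set (fun i j : nat => (i <= j)%N).
Proof.
split; first by exists 0%N.
- by move=> i.
- by move=> i j k; apply: leq_trans.
- by move=> i j; exists (maxn i j); rewrite leq_maxl leq_maxr.
Qed.

Lemma oc_seq phi (z : T -> R) (xm : nat -> T -> R) :
  order_continuous P X phi -> X z -> (forall m, X (xm m)) ->
  (forall m, phi (xm m) = phi z) ->
  (forall m m', (m <= m')%N -> ale P (xm m') (xm m)) ->
  (forall m, ale P (fun _ => 0) (xm m)) ->
  (forall w, X w -> (forall m, ale P w (xm m)) -> ale P w (fun _ => 0)) ->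
  phi z = 0.
Proof.
move=> [fphi oc] hz Xx phix dec x0 inf.
apply: eq0_lt => e e0.
have hc : order_conv0 P X (fun i j : nat => (i <= j)%N) xm.
  exists nat, (fun i j : nat => (i <= j)%N), xm; split.
    by split => //; exact: dir_nat.
  move=> b; exists b => a ba; apply: filterS2 (dec _ _ ba) (x0 a) => t h1 h2.
  by rewrite ger0_norm.
have [a0 ha0] := oc nat _ xm dir_nat Xx hc e e0.
by rewrite -(phix a0); apply: ha0.
Qed.

Lemma killed_bigcup phi (A : nat -> set T) : order_continuous P X phi ->
  (forall n, measurable (A n)) -> (forall n, killed phi (A n)) ->
  killed phi (\bigcup_n A n).
Proof.
move=> ocp mA kA z hz z0 sz; have fphi := ocp.1.
pose Bm m := fun t => exists2 k, (k < m)%N & A k t.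
have BmS : forall m, Bm m.+1 = Bm m `|` A m.
  move=> m; apply/seteqP; split => t.
    by move=> [k]; rewrite ltnS leq_eqVlt => /orP [/eqP ->|km] h; [right|left; exists k].
  by move=> [[k km h]|h]; [exists k => //; rewrite ltnS ltnW | exists m].
have mB : forall m, measurable (Bm m).
  elim=> [|m IH]; last by rewrite BmS; apply: measurableU.
  by have -> : Bm 0%N = set0 by apply/seteqP; split => t // [].
have kB : forall m, killed phi (Bm m).
  elim=> [|m IH]; last by rewrite BmS; apply: killed_U.
  have -> : Bm 0%N = set0 by apply/seteqP; split => t // [].
  exact: killed0.
pose xm m := rz z (~` Bm m).
apply: (oc_seq ocp hz (xm := xm)).
- by move=> m; apply: Xrz => //; apply: measurableC.
- move=> m; have X1 := Xrz (mB m) hz; have X2 := Xrz (measurableC (mB m)) hz.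
  rewrite [in RHS](rz_split z (Bm m)) (linD fphi X1 X2) (kB m _ X1 (rz_ge0 _ z0) (supp_rz _ _)).
  by rewrite add0r.
- move=> m m' mm'; apply: filterS z0 => t zt; rewrite /xm /rz.
  case: (pselect (Bm m t)) => h.
    have h' : Bm m' t by case: h => k km hk; exists k => //; exact: leq_trans km mm'.
    rewrite (ind0 (A := ~` Bm m) (t := t)); last by apply.
    by rewrite (ind0 (A := ~` Bm m') (t := t)) ?mulr0 //; apply.
  rewrite (ind1 (A := ~` Bm m) (t := t)) // mulr1.
  by case: (ind01 (~` Bm m') t) => ->; rewrite ?mulr0 ?mulr1.
- by move=> m; apply: rz_ge0.
- move=> w hw hwx; have := ae_foralln hwx; move=> hall.
  rewrite /supp in sz; apply: filterS2 hall sz => t h1 h2.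
  case: (pselect ((\bigcup_n A n) t)) => [[n _ hn]|nA].
    apply: le_trans (h1 n.+1) _; rewrite /xm /rz ind0 ?mulr0 //.
    by move=> []; exists n.
  apply: le_trans (h1 0%N) _; rewrite /xm /rz (h2 nA) mul0r //.
Qed.

Lemma measurable_pos (z : T -> R) : measurable_fun setT z -> measurable [set t | 0 < z t].
Proof.
move=> mz; have := mz measurableT _ (measurable_itv `]0, +oo[); rewrite setTI.
congr measurable; apply/seteqP; split => t /=; by rewrite in_itv /= andbT.
Qed.

Lemma killed_pos phi z : order_continuous P X phi -> posf phi -> X z ->
  ale P (fun _ => 0) z -> phi z = 0 -> killed phi [set t | 0 < z t].
Proof.
move=> ocp pp hz z0 pz u hu u0 su; have fphi := ocp.1.
pose v (k : nat) := fun t => Num.min (u t) (k%:R * z t).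
have Xkz : forall k : nat, X (fun t => k%:R * z t) by move=> k; apply: XZ.
have v0 : forall k, ale P (fun _ => 0) (v k).
  move=> k; apply: filterS2 u0 z0 => t h1 h2; rewrite /v le_min h1 /=.
  by rewrite mulr_ge0.
have Xv : forall k, X (v k).
  move=> k; apply: (Xid _ hu).
    exact: measurable_realfun.measurable_minr (Xm hu) (Xm (Xkz k)).
  apply: filterS2 u0 z0 => t h1 h2; rewrite !ger0_norm //; last by rewrite /v le_min h1 mulr_ge0.
  by rewrite /v ge_min lexx.
have pv : forall k, phi (v k) = 0.
  move=> k; apply/eqP; rewrite eq_le pp // andbT.
  apply: le_trans (_ : phi (fun t => k%:R * z t) <= _).
    by apply: pos_mono => //; apply: aeWP => t; rewrite /v ge_min lexx orbT.
  by rewrite (linZ fphi) // pz mulr0.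
pose xm k := fun t => u t - v k t.
apply: (oc_seq ocp hu (xm := xm)).
- by move=> m; apply: XB.
- by move=> m; rewrite (linB fphi) // pv subr0.
- move=> m m' mm'; apply: filterS z0 => t zt; rewrite /xm lerD2l lerN2 /v le_min ge_min lexx /=.
  rewrite ge_min; apply/orP; right; apply: ler_wpM2r => //; by rewrite ler_nat.
- by move=> m; apply: aeWP => t; rewrite /xm subr_ge0 /v ge_min lexx.
- move=> w hw hwx; have hall := ae_foralln hwx.
  have H1 : \forall t \ae P, (0 <= z t) /\ (~ (0 < z t) -> u t = 0).
    by rewrite /supp in su; apply: filterS2 z0 su => t a b; split.
  apply: filterS2 hall H1 => t h1 [h2 h3].
  case: (pselect (0 < z t)) => zp.
    have hb := archi_boundP (normr_ge0 (u t / z t)).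
    set B := Num.Def.archi_bound _ in hb.
    apply: le_trans (h1 B) _; rewrite /xm /v.
    have : u t <= B%:R * z t.
      rewrite -ler_pdivrMr //; apply: le_trans (ltW hb); exact: ler_norm.
    by move=> hB; rewrite (min_idPl hB) subrr.
  by apply: le_trans (h1 0%N) _; rewrite /xm /v (h3 zp) mul0r minxx subrr.
Qed.

Lemma maxkilled phi : order_continuous P X phi -> posf phi ->
  exists K, [/\ measurable K, killed phi K &
    forall A, measurable A -> killed phi A -> P (A `\` K) = 0].
Proof.
move=> ocp pp; have fphi := ocp.1.
pose S := [set pr A | A in [set A | measurable A /\ killed phi A]].
have S0 : S !=set0 by exists (pr set0); exists set0 => //; split => //; exact: killed0.
have Sub : has_ubound S by exists 1 => _ [A [mA _] <-]; exact: pr_le1.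
pose be := sup S.
have hn : forall n, exists A, (measurable A /\ killed phi A) /\ be - w n < pr A.
  move=> n; have : be - w n < be by rewrite ltrBlDr ltrDl w_gt0.
  by move=> /(sup_gt S0) [_ [A hA <-] h]; exists A.
have [An hAn] := choice hn.
pose K := \bigcup_n An n.
have mK : measurable K by apply: bigcupT_measurable => n; case: (hAn n) => [[]].
have kK : killed phi K by apply: killed_bigcup => // n; case: (hAn n) => [[]].
have prK : pr K = be.
  apply/eqP; rewrite eq_le; apply/andP; split.
    by apply: ub_le_sup => //; exists K.
  apply: (le_w (K := 1)) => n; rewrite mul1r -lerBlDr; apply: ltW.
  case: (hAn n) => [[mA _] h]; apply: lt_le_trans h _.
  by apply: pr_mono => // t hA; exists n.
exists K; split => // A mA kA.
have kAK : killed phi (K `|` A) by apply: killed_U.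
have h1 : pr (K `|` A) <= be by apply: ub_le_sup => //; exists (K `|` A) => //; split => //; exact: measurableU.
have e1 : K `|` A = K `|` (A `\` K).
  apply/seteqP; split => t; first by case=> h; [left|case: (pselect (K t)) => hk; [left|right]].
  by case=> [h|[h _]]; [left|right].
have h2 : pr (K `|` A) = pr K + pr (A `\` K).
  rewrite e1 prU //; first exact: measurableD.
  by apply/seteqP; split => t // [h [_ h']].
apply: pr0; first exact: measurableD.
apply/eqP; rewrite eq_le pr_ge0 andbT; move: h1; rewrite h2 prK; lra.
Qed.
Section Sep.
Variable C : set (T -> R).
Hypotheses (wC : weakly_closed P X C) (cC : is_cone X C) (C0 : C (fun _ => 0)).

Lemma sep z : X z -> ~ C z -> exists phi, order_continuous P X phi /\
  (forall c, C c -> phi c <= 0) /\ 0 < phi z.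
Proof.
move=> hz nCz; case: wC => CX /(_ z hz nCz) [s [e [hs [e0 hn]]]].
have [_ [cD cZ]] := cC.
pose n := size s.
pose f i := nth (fun _ => 0) s i.
have foc : forall i, (i < n)%N -> order_continuous P X (f i).
  by move=> i ilt; apply: hs; apply: mem_nth.
pose Tv y := fun i => f i y.
pose E v := [set Mx n (fun i => v i - Tv c i) | c in C].
pose qC v := inf (E v).
have E0 : forall v, E v !=set0 by move=> v; exists (Mx n (fun i => v i - Tv (fun _ => 0) i)); exists (fun _ => 0).
have Elb : forall v, has_lbound (E v) by move=> v; exists 0 => _ [c _ <-]; exact: Mx_ge0.
have qC_le : forall v c, C c -> qC v <= Mx n (fun i => v i - Tv c i).
  by move=> v c hc; apply: ge_inf => //; exists c.
have qC_ge : forall v b, (forall c, C c -> b <= Mx n (fun i => v i - Tv c i)) -> b <= qC v.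
  by move=> v b h; apply: lb_le_inf => // _ [c hc <-]; apply: h.
have sq : sublin n qC.
  split.
  - move=> u v; rewrite -lerBlDr; apply: (qC_ge) => c1 hc1; rewrite lerBlDr addrC -lerBlDr.
    apply: (qC_ge) => c2 hc2; rewrite lerBlDr.
    apply: le_trans ((qC_le) _ (fun t => c1 t + c2 t) (cD _ _ hc1 hc2)) _.
    rewrite addrC; apply: le_trans (Mx_D _ _ _); apply: eq_ler; apply: Mx_loc => i ilt.
    rewrite /Tv (linD (foc i ilt).1 (CX _ hc1) (CX _ hc2)); ring.
  - move=> a u a0; case: (eqVneq a 0) => [->|an0].
      apply: le_trans ((qC_le) _ _ C0) _; apply: eq_ler; rewrite mul0r -[RHS](Mx0 n).
      apply: Mx_loc => i ilt.
      by rewrite /Tv /= (lin0 (foc i ilt).1) mul0r subr0.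
    have ap : 0 < a by rewrite lt_neqAle eq_sym an0.
    rewrite mulrC -ler_pdivrMr //; apply: (qC_ge) => c hc; rewrite ler_pdivrMr //.
    apply: le_trans ((qC_le) _ (fun t => a * c t) (cZ _ _ a0 hc)) _.
    rewrite mulrC; apply: le_trans (Mx_Z _ _ a0); apply: eq_ler; apply: Mx_loc => i ilt.
    rewrite /Tv (linZ (foc i ilt).1 a (CX _ hc)); ring.
  - move=> u v huv; congr inf; rewrite /E; congr image; apply: funext => c.
    by apply: Mx_loc => i ilt; rewrite huv.
have [l [hl1 hl2]] := hb_fin sq (Tv z).
exists (fun y => \sum_(i < n) l i * f i y); split; first exact: ocsum.
split.
  move=> c hc; apply: le_trans (hl1 (Tv c)) _.
  apply: le_trans ((qC_le) _ _ hc) _; rewrite -(Mx0 n); apply: eq_ler; apply: Mx_loc => i _.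
  by rewrite subrr.
have -> : \sum_(i < n) l i * f i z = dot n l (Tv z) by [].
rewrite hl2; apply: lt_le_trans e0 _; apply: (qC_ge) => c hc.
rewrite leNgt; apply/negP => hlt; apply: (hn c (CX c hc)) => // phi /nthP.
move=> /(_ (fun _ => 0)) [i ilt <-].
by rewrite distrC; apply: (Mx_lt hlt).
Qed.

Definition Phi (phi : (T -> R) -> R) := [/\ order_continuous P X phi, posf phi &
  (forall c, C c -> phi c <= 0)].

Lemma combo (psi : nat -> (T -> R) -> R) : (forall n, Phi (psi n)) ->
  exists f, Phi f /\ forall n, exists c, 0 < c /\
    forall y, X y -> ale P (fun _ => 0) y -> c * psi n y <= f y.
Proof.
move=> hpsi.
have hM : forall n, exists M, 0 <= M /\ forall y, X y -> `|psi n y| <= M * N y.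
  by move=> n; case: (hpsi n) => [[fn _] pn _]; apply: pos_bounded.
have [M hMn] := choice hM.
have fp : forall n, functional_on P X (psi n) by move=> n; case: (hpsi n) => [[]].
pose c n := w n / (1 + M n).
have M0 : forall n, 0 < 1 + M n by move=> n; case: (hMn n) => h _; rewrite ltr_pwDl.
have c0 : forall n, 0 < c n by move=> n; rewrite divr_gt0 ?w_gt0.
pose S y l := \sum_(k < l) c k * psi k y.
pose f y := glim (S y) (N y).
have Sstep : forall y k, X y -> `|S y k.+1 - S y k| <= N y * w k.
  move=> y k hy; rewrite /S big_ord_recr /= addrAC subrr add0r normrM (ger0_norm (ltW (c0 k))).
  case: (hMn k) => Mk0 hb; apply: le_trans (ler_wpM2l (ltW (c0 k)) (hb y hy)) _.
  have cM : c k * M k <= w k by rewrite /c mulrAC ler_pdivrMr // ler_wpM2l ?w_ge0 // lerDr.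
  by rewrite mulrA [N y * w k]mulrC ler_wpM2r // N_ge0.
have fP : forall y, X y -> forall l, `|f y - S y l| <= 2 * N y * w l.
  by move=> y hy; apply: glimP; [exact: N_ge0 | move=> k; exact: Sstep].
have SD : forall y z l, X y -> X z -> S (fun t => y t + z t) l = S y l + S z l.
  move=> y z l hy hz; rewrite /S -big_split /=; apply: eq_bigr => k _.
  by rewrite (linD (fp k)) // mulrDr.
have SZ : forall (a : R) y l, X y -> S (fun t => a * y t) l = a * S y l.
  move=> a y l hy; rewrite /S mulr_sumr; apply: eq_bigr => k _.
  by rewrite (linZ (fp k)) // mulrCA.
have Spos : forall y l m, X y -> ale P (fun _ => 0) y -> (l <= m)%N -> 0 <= S y l <= S y m.
  move=> y l m hy y0 lm; rewrite -(subnKC lm); elim: (m - l)%N => [|k IH].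
    rewrite addn0 lexx andbT /S sumr_ge0 // => i _; rewrite mulr_ge0 //; first exact: ltW.
    by case: (hpsi i) => _ pi _; apply: pi.
  move/andP: IH => [IH1 IH2]; rewrite IH1 /=; apply: le_trans IH2 _.
  rewrite addnS /S big_ord_recr /= lerDl mulr_ge0 //; first exact: ltW.
  by case: (hpsi (l + k)%N) => _ pi _; apply: pi.
have fge : forall y l, X y -> ale P (fun _ => 0) y -> S y l <= f y.
  move=> y l hy y0; apply: (le_w (K := 2 * N y)) => m.
  have := fP y hy (maxn l m); rewrite ler_norml => /andP [h1 _].
  have := Spos y l (maxn l m) hy y0 (leq_maxl _ _) => /andP [_ h2].
  have := w_mono (leq_maxr l m); have := N_ge0 hy; nra.
exists f; split; last first.
  move=> n; exists (c n); split => // y hy y0.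
  apply: le_trans (fge y n.+1 hy y0); rewrite /S big_ord_recr /= lerDr.
  by case/andP: (Spos y 0%N n hy y0 (leq0n _)); rewrite /S big_ord0.
have ff : functional_on P X f.
  split.
  - move=> y z hy hz hyz; rewrite /f (N_ae hy hz hyz).
    have -> : S y = S z => //; apply: funext => l; apply: eq_bigr => k _.
    by rewrite (lin_ae (fp k) hy hz hyz).
  - move=> y z hy hz; have hyz := XD hy hz.
    apply/eqP; rewrite -subr_eq0; apply/eqP.
    apply: (eq0_w (K := 2 * (N (fun t => y t + z t) + N y + N z))) => l.
    have h1 := fP _ hyz l; have h2 := fP _ hy l; have h3 := fP _ hz l.
    rewrite SD // in h1.
    apply: le_trans (_ : `|f (fun t => y t + z t) - (S y l + S z l)| + `|f y - S y l| + `|f z - S z l| <= _).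
      apply: le_trans (_ : `|(f (fun t => y t + z t) - (S y l + S z l)) - (f y - S y l) - (f z - S z l)| <= _).
        by apply: eq_ler; congr Num.norm; ring.
      apply: le_trans (ler_normB _ _) _; rewrite lerD2r; exact: ler_normB.
    have := w_ge0 l; lra.
  - move=> a y hy; have hay := XZ a hy.
    apply/eqP; rewrite -subr_eq0; apply/eqP.
    apply: (eq0_w (K := 2 * (N (fun t => a * y t) + `|a| * N y))) => l.
    have h1 := fP _ hay l; have h2 := fP _ hy l.
    rewrite SZ // in h1.
    apply: le_trans (_ : `|f (fun t => a * y t) - a * S y l| + `|a| * `|f y - S y l| <= _).
      rewrite -normrM; apply: le_trans (_ : `|(f (fun t => a * y t) - a * S y l) - a * (f y - S y l)| <= _).
        by apply: eq_ler; congr Num.norm; ring.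
      exact: ler_normB.
    have := ler_wpM2l (normr_ge0 a) h2; have := w_ge0 l; nra.
split => //.
- split => // A leA x dA hx hc e e0; case: (hc) => B [leB [z [[dB Xz zdec z0 zinf] hconv]]].
  case: (dB) => [[b0 _] _ _ _].
  have [a1 ha1] := hconv b0.
  have e2 : 0 < e / 2 by rewrite divr_gt0.
  have [l hl] := w_small (2 * N (z b0)) e2.
  have ocp : forall i, order_continuous P X (psi i) by move=> i; case: (hpsi i).
  have [_ hS] := @ocsum l c psi (fun i _ => ocp i).
  have [a2 ha2] := hS A leA x dA hx hc _ e2.
  case: (dA) => _ _ tr dir; have [k [k1 k2]] := dir a1 a2.
  exists k => a ka.
  have Nx : N (x a) <= N (z b0).
    apply: Nmono => //; apply: filterS2 (ha1 a (tr _ _ _ k1 ka)) (z0 b0) => t h1 h2.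
    by rewrite (ger0_norm h2).
  have h1 := fP _ (hx a) l.
  have h2 := ha2 a (tr _ _ _ k2 ka).
  apply: (@le_lt_trans _ _ (`|f (x a) - S (x a) l| + `|S (x a) l|)).
    by rewrite -{1}(subrK (S (x a) l) (f (x a))) ler_normD.
  rewrite (splitr e); apply: ler_ltD => //.
  apply: le_trans h1 _; apply: ltW; apply: le_lt_trans hl.
  by rewrite -mulrA -[X in _ <= X]mulrA ler_pM2l // ler_wpM2r // w_ge0.
- by move=> y hy y0; apply: le_trans (fge y 0%N hy y0); rewrite /S big_ord0.
- move=> c1 hc1; have hc1X : X c1 by case: cC => h _; apply: h.
  apply: (le_w (K := 2 * N c1)) => l; rewrite add0r.
  have := fP _ hc1X l; rewrite ler_norml => /andP [_ h].
  have : S c1 l <= 0.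
    rewrite /S; apply: sumr_le0 => i _; rewrite pmulr_rle0 //.
    by case: (hpsi i) => _ _ h3; apply: h3.
  lra.
Qed.

Lemma PhiD f g : Phi f -> Phi g -> Phi (fun x => f x + g x).
Proof.
move=> [h1 h2 h3] [h4 h5 h6]; split; first exact: ocD.
  by move=> y hy y0; apply: addr_ge0; [apply: h2 | apply: h5].
by move=> c hc; have := h3 c hc; have := h6 c hc; lra.
Qed.

Lemma killedD f g A : Phi f -> Phi g -> killed (fun x => f x + g x) A -> killed f A /\ killed g A.
Proof.
move=> [_ pf _] [_ pg _] k; split => z hz z0 sz; have := k z hz z0 sz;
  have := pf z hz z0; have := pg z hz z0; lra.
Qed.

Lemma main_sep (hneg : forall x, X x -> ale P (fun _ => 0) x -> C (fun t => - x t))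
  (hpos : forall x, C x -> ale P (fun _ => 0) x -> aeq P x (fun _ => 0)) :
  exists phi, order_continuous P X phi /\ strictly_positive P X phi /\
    (forall x, C x -> phi x <= 0).
Proof.
have CX : C `<=` X by case: cC.
have sepPhi : forall y, X y -> ~ C y -> exists phi, Phi phi /\ 0 < phi y.
  move=> y hy nCy; have [phi [ocp [cp py]]] := sep hy nCy; exists phi; split => //; split => //.
  move=> x hx x0; have := cp _ (hneg x hx x0); rewrite (linN ocp.1) //; lra.
pose maxk psi K := forall A, measurable A -> killed psi A -> P (A `\` K) = 0.
pose KK := [set pr K | K in [set K | measurable K /\ exists psi, [/\ Phi psi, killed psi K & maxk psi K]]].
have KK0 : KK !=set0.
  exists (pr setT); exists setT => //; split => //; exists (fun _ => 0); split.
  - split; [exact: oc0 | by move=> *| by move=> *].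
  - by move=> *.
  - by move=> A mA _; rewrite setDT measure0.
have KKlb : has_lbound KK by exists 0 => _ [K _ <-]; exact: pr_ge0.
pose be := inf KK.
have hn : forall n, exists Kp : set T * ((T -> R) -> R),
    [/\ measurable Kp.1, Phi Kp.2, killed Kp.2 Kp.1, maxk Kp.2 Kp.1 & pr Kp.1 < be + w n].
  move=> n; have : be < be + w n by rewrite ltrDl w_gt0.
  move=> /(inf_lt KK0) [_ [K [mK [psi [p1 p2 p3]]] <-] h].
  by exists (K, psi); split.
have [F hF] := choice hn.
have [f [Pf hf]] := combo (psi := fun n => (F n).2) (fun n => let: And5 _ h _ _ _ := hF n in h).
have [K [mK kK mxK]] := maxkilled (let: And3 h _ _ := Pf in h) (let: And3 _ h _ := Pf in h).
have prK : pr K <= be.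
  apply: (le_w (K := 1)) => n; rewrite mul1r; apply: ltW.
  case: (hF n) => m1 P1 k1 mx1 lt1; apply: le_lt_trans lt1.
  have kn : killed (F n).2 K.
    move=> z hz z0 sz; have [c [c0 hc]] := hf n; have := hc z hz z0.
    rewrite (kK z hz z0 sz) pmulr_rle0 // => h1.
    case: P1 => _ p1 _; have := p1 z hz z0; lra.
  have := mx1 K mK kn => h0.
  have e : pr K <= pr ((F n).1 `|` (K `\` (F n).1)).
    apply: pr_mono => //; first by apply: measurableU => //; exact: measurableD.
    by move=> t hK; case: (pselect ((F n).1 t)) => h; [left|right].
  apply: le_trans e _; rewrite (prU m1 (measurableD mK m1)); last first.
    by apply/seteqP; split => t // [h [_ h']].
  by rewrite /pr h0 /= addr0.
exists f; split; first by case: Pf.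
split; last by case: Pf.
move=> y hy y0 ny.
have fy0 : 0 <= f y by case: Pf => _ pf _; apply: pf.
rewrite lt_neqAle fy0 andbT; apply/negP => /eqP fy.
have mZ := measurable_pos (Xm hy).
have kZ : killed f [set t | 0 < y t] by apply: killed_pos => //; [case: Pf | case: Pf].
have ZK := mxK _ mZ kZ.
have nCy : ~ C y by move=> hCy; apply: ny; apply: hpos.
have [phi [Pphi phiy]] := sepPhi y hy nCy.
have Pf' := PhiD Pf Pphi.
have [K' [mK' kK' mxK']] := maxkilled (let: And3 h _ _ := Pf' in h) (let: And3 _ h _ := Pf' in h).
have [kfK' kphiK'] := killedD Pf Pphi kK'.
have K'K := mxK _ mK' kfK'.
have beK' : be <= pr K'.
  apply: ge_inf => //; exists K' => //; split => //; exists (fun x => f x + phi x); split => //.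
have split1 : forall A B, measurable A -> measurable B -> pr A = pr (A `&` B) + pr (A `\` B).
  move=> A B mA mB; rewrite -prU //; [|exact: measurableI|exact: measurableD|].
    congr pr; apply/seteqP; split => t.
      by move=> hA; case: (pselect (B t)) => h; [left|right].
    by case=> -[].
  by apply/seteqP; split => t // [[_ h] [_ h']].
have KK' : P (K `\` K') = 0.
  apply: pr0; first exact: measurableD.
  have e1 := split1 K' K mK' mK; have e2 := split1 K K' mK mK'.
  have h0 : pr (K' `\` K) = 0 by rewrite /pr K'K.
  rewrite h0 addr0 setIC in e1.
  apply/eqP; rewrite eq_le pr_ge0 andbT; move: prK beK' e1 e2; lra.
have sy : supp y K'.
  rewrite /supp; have a1 := negl_ae (measurableD mZ mK) ZK (fun t (h : ~ ([set t | 0 < y t] `\` K) t) => h).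
  have a2 := negl_ae (measurableD mK mK') KK' (fun t (h : ~ (K `\` K') t) => h).
  apply: filterS3 y0 a1 a2 => t h0 h1 h2 nK'.
  apply/eqP; rewrite eq_le h0 andbT leNgt; apply/negP => ypos.
  apply: nK'; apply: contrapT => nK'; apply: h2; split => //.
  by apply: contrapT => nK; apply: h1; split.
have := kphiK' y hy y0 sy; lra.
Qed.
End Sep.

End Main.

Unset Implicit Arguments.

Theorem proposition3p5 (d : measure_display) (T : measurableType d) (R : realType)
    (P : probability T R) (X : set (T -> R)) (N : (T -> R) -> R) :
  banach_function_space P X N ->
  forall C : set (T -> R),
    weakly_closed P X C -> is_cone X C ->
    (forall x, X x -> ale P (fun _ => 0) x -> C (fun t => - x t)) ->
    (forall x, C x -> ale P (fun _ => 0) x -> aeq P x (fun _ => 0)) ->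
    exists phi : (T -> R) -> R,
      order_continuous P X phi /\ strictly_positive P X phi /\
      (forall x, C x -> phi x <= 0).
Proof.
move=> hX C wC cC hneg hpos.
have C0 : C (fun _ => 0).
  have h0 : ale P (fun _ => 0) (fun _ : T => (0:R)) by apply: aeWP => t.
  have := hneg (fun _ => 0) (X0 hX) h0.
  by have -> : (fun _ : T => - (0:R)) = (fun _ => 0) by apply: funext => t; rewrite oppr0.
exact (main_sep hX wC cC C0 hneg hpos).
Qed.
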